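(* Let $\mathsf{T}$ be a rooted plane tree, let $k\geq 0$ be an integer, and suppose $\delta'=\mathsf{Pop}^k(\delta)$ for some $\delta\in\mathcal{O}(\mathsf{T})$. Then for each $v\in\mathsf{T}$, each section of $\delta'(v)$ has at least $k-1$ (distinct) beads in $\delta'$.
   Context: A rooted plane tree $\mathsf{T}$ is a finite tree with a distinguished root, regarded as a poset $\leq_\mathsf{T}$ in which $v'\leq_\mathsf{T} v$ iff $v$ lies on the path from $v'$ to the root; children of $v$ are nodes covered by $v$. For a set $S$ of nodes and a node $u$, $\Delta_S(u)=\{x\in S:x\leq_\mathsf{T} u\}$. An ornament is a nonempty set of nodes inducing a connected subgraph; an ornamentation is a map $\sigma$ from nodes to ornaments such that the unique maximal element of $\sigma(v)$ is $v$ and any two sets $\sigma(v),\sigma(v')$ are nested or disjoint. $\mathcal{O}(\mathsf{T})$ is the set of ornamentations ordered by pointwise inclusion (a lattice with meet given by pointwise intersection); $\mathsf{Pop}(\sigma)=\bigwedge(\{\sigma\}\cup\{\sigma':\sigma'\lessdot\sigma\})$ and $\mathsf{Pop}^k$ is its $k$-th iterate. A section of $\sigma(v)$ is a set $\Delta_{\sigma(v)}(v')$ for a child $v'$ of $v$ with $v'\in\sigma(v)$ (the $v'$-section). An ornament $\sigma(x)$ is a bead of the $v'$-section of $\sigma(v)$ in $\sigma$ if $x\leq_\mathsf{T} v'$, $x\notin\sigma(v)$, and for every node $y$ on the path from $v'$ to $x$ (endpoints included), either $y\in\sigma(v)$ or $\sigma(y)=\{y\}$. *)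

(* Defs.v *)
From mathcomp Require Import all_boot.
Set Implicit Arguments. Unset Strict Implicit. Unset Printing Implicit Defensive.

(* A rooted tree on a finite node type T is given by a parent function
   [p : T -> T] with [p r = r] for the root r and such that every node
   reaches r by iterating p (see the hypotheses of the theorem).  *)

Section Orn.
Variables (T : finType) (p : T -> T).

Definition tle (x y : T) : bool := fconnect p x y.
Definition tlt (x y : T) : bool := (x != y) && tle x y.

Definition is_child (c v : T) : bool := (p c == v) && (c != v).

Definition tedge (S : {set T}) : rel T :=
  fun x y => [&& x \in S, y \in S & is_child x y || is_child y x].

Definition ornament (S : {set T}) : bool :=
  (S != set0) && [forall x in S, forall y in S, connect (tedge S) x y].

Definition is_max_in (S : {set T}) (x : T) : bool :=
  (x \in S) && [forall y in S, ~~ tlt x y].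

Definition is_ornamentation (s : {ffun T -> {set T}}) : bool :=
  [forall v, ornament (s v) && [forall x, is_max_in (s v) x == (x == v)]] &&
  [forall v, forall w,
     [|| s v \subset s w, s w \subset s v | [disjoint s v & s w]]].

Definition orn_le (s t : {ffun T -> {set T}}) : bool :=
  [forall v, s v \subset t v].
Definition orn_lt (s t : {ffun T -> {set T}}) : bool :=
  (s != t) && orn_le s t.

Definition orn_covered (s' s : {ffun T -> {set T}}) : bool :=
  [&& is_ornamentation s', is_ornamentation s, orn_lt s' s &
      [forall t, ~~ [&& is_ornamentation t, orn_lt s' t & orn_lt t s]]].

(* Pop(s) = meet of s and all elements covered by s; the meet in O(T)
   is pointwise intersection. *)
Definition Pop (s : {ffun T -> {set T}}) : {ffun T -> {set T}} :=
  [ffun v => s v :&: \bigcap_(s' | orn_covered s' s) s' v].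

(* the c-section of s(v), for a child c of v with c \in s v *)
Definition section (s : {ffun T -> {set T}}) (v c : T) : {set T} :=
  [set x in s v | tle x c].

(* s(x) is a bead of the c-section of s(v) *)
Definition is_bead (s : {ffun T -> {set T}}) (v c x : T) : bool :=
  [&& tle x c, x \notin s v &
      [forall y, (tle x y && tle y c) ==> ((y \in s v) || (s y == [set y]))]].

Definition beads (s : {ffun T -> {set T}}) (v c : T) : {set {set T}} :=
  (fun x => s x) @: [set x | is_bead s v c x].

End Orn.

(* Main.v *)
Require Import Defs.
From mathcomp Require Import all_boot zify.
From Stdlib Require Import Classical.
Set Implicit Arguments. Unset Strict Implicit. Unset Printing Implicit Defensive.

Definition is_tree (T : finType) (p : T -> T) :=
  exists r, p r = r /\ forall v, fconnect p v r.

Lemma tleP (T : finType) (p : T -> T) x y :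
  reflect (exists n, iter n p x = y) (tle p x y).
Proof.
apply: (iffP idP); first by move=> H; exists (findex p x y); exact: iter_findex.
by case=> n <-; exact: fconnect_iter.
Qed.

Lemma tle_refl (T : finType) (p : T -> T) x : tle p x x.
Proof. exact: connect0. Qed.

Lemma tle_trans (T : finType) (p : T -> T) x y z :
  tle p x y -> tle p y z -> tle p x z.
Proof. exact: connect_trans. Qed.

Lemma tle_p (T : finType) (p : T -> T) x : tle p x (p x).
Proof. exact: fconnect1. Qed.

Lemma iter_fix (T : Type) (p : T -> T) r n : p r = r -> iter n p r = r.
Proof. by move=> H; elim: n => //= n ->. Qed.

Lemma iter_mul (T : Type) (p : T -> T) x N a :
  iter N p x = x -> iter (a * N) p x = x.
Proof. by move=> H; elim: a => //= a IH; rewrite mulSn iterD IH H. Qed.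

Lemma tle_anti (T : finType) (p : T -> T) : is_tree p ->
  forall x y, tle p x y -> tle p y x -> x = y.
Proof.
case=> r [Hr Ht] x y /tleP [n Hn] /tleP [m Hm].
have Hx : iter (m + n) p x = x by rewrite iterD Hn.
case: (posnP (m + n)) => [H0|Hpos].
  by move: Hn; have -> : n = 0 by lia.
case/tleP: (Ht x) => a Ha.
have : iter (a * (m + n)) p x = x by exact: iter_mul.
have Hle : a <= a * (m + n) by rewrite leq_pmulr.
rewrite -(subnK Hle) iterD Ha iter_fix // => Hxr.
by rewrite -Hn -Hxr iter_fix.
Qed.

Lemma tle_total (T : finType) (p : T -> T) x y z :
  tle p x y -> tle p x z -> tle p y z || tle p z y.
Proof.
move=> /tleP [n <-] /tleP [m <-].
case: (leqP n m) => H.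
  by apply/orP; left; apply/tleP; exists (m - n); rewrite -iterD subnK.
by apply/orP; right; apply/tleP; exists (n - m); rewrite -iterD subnK // ltnW.
Qed.

Lemma tle_step (T : finType) (p : T -> T) x y :
  tle p x y -> x != y -> tle p (p x) y.
Proof.
move=> /tleP [[|n] <-] //=; first by rewrite eqxx.
by move=> _; apply/tleP; exists n; rewrite -iterSr.
Qed.

Lemma tle_cases (T : finType) (p : T -> T) x y :
  tle p x y -> y = x \/ tle p (p x) y.
Proof.
move=> H; case: (eqVneq x y) => [->|ne]; first by left.
by right; exact: tle_step.
Qed.

Lemma p_neq (T : finType) (p : T -> T) : is_tree p ->
  forall x w, tle p x w -> x != w -> p x != x.
Proof.
move=> Htr x w Hxw ne; apply/eqP => Hpx.
case: Htr => r [Hr Ht].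
case/tleP: (Ht x) => a; rewrite iter_fix // => Hxr.
case/tleP: Hxw => n; rewrite iter_fix // => Hxw.
by rewrite Hxw eqxx in ne.
Qed.

Definition anc (T : finType) (p : T -> T) x := [set y | tle p x y].

Lemma anc_lt (T : finType) (p : T -> T) : is_tree p ->
  forall x y, tle p x y -> x != y -> #|anc p y| < #|anc p x|.
Proof.
move=> Htr x y Hxy ne; apply: proper_card; apply/properP; split.
  by apply/subsetP => z; rewrite !inE => Hz; exact: tle_trans Hxy Hz.
exists x; first by rewrite inE tle_refl.
by rewrite inE; apply/negP => Hyx; move/eqP: ne; apply; exact: (tle_anti Htr Hxy Hyx).
Qed.

Definition good_orn (T : finType) (p : T -> T) (S : {set T}) (w : T) :=
  [/\ w \in S, forall x, x \in S -> tle p x w &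
      forall x, x \in S -> x != w -> p x \in S].

Lemma tedge_sym (T : finType) (p : T -> T) S : symmetric (tedge p S).
Proof. by move=> x y; rewrite /tedge andbCA orbC. Qed.

Lemma path_exit (T : finType) (p : T -> T) S x s a :
  path (tedge p S) a s -> tle p a x -> ~~ tle p (last a s) x -> p x \in S.
Proof.
elim: s a => [|y s IH] a /=; first by move=> _ ->.
case/andP=> Hay Hp Hax Hl.
case Hyx: (tle p y x); first exact: IH Hp Hyx Hl.
move: Hay; rewrite /tedge => /and3P [HaS HyS /orP [] /andP [/eqP Hpa _]].
  case: (tle_cases Hax) => [->|]; first by rewrite Hpa.
  by rewrite Hpa Hyx.
by move: Hyx; rewrite (tle_trans (tle_p p y)) // Hpa.
Qed.

Lemma orn_good (T : finType) (p : T -> T) : is_tree p ->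
  forall S w, ornament p S -> (forall x, is_max_in p S x == (x == w)) ->
  good_orn p S w.
Proof.
move=> Htr S w /andP [_ /forallP Hcon] Hmax.
have HwS : w \in S by have /eqP := Hmax w; rewrite eqxx => /andP [].
have Hle : forall x, x \in S -> tle p x w.
  move=> x HxS.
  have Px : (x \in S) && tle p x x by rewrite HxS tle_refl.
  case: (@arg_minnP T x (fun z => (z \in S) && tle p x z) (fun z => #|anc p z|) Px) => z /andP [HzS Hxz] Hmin.
  suff : z == w by move/eqP <-.
  rewrite -(eqP (Hmax z)); apply/andP; split => //.
  apply/forallP => y; apply/implyP => HyS; apply/negP => /andP [ne Hzy].
  have := Hmin y; rewrite HyS (tle_trans Hxz Hzy) => /(_ isT).
  by rewrite leqNgt (anc_lt Htr Hzy ne).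
split => // x HxS ne.
move: (Hcon x); rewrite HxS => /forallP /(_ w); rewrite HwS /= => /connectP [s Hs Hl].
apply: (path_exit Hs (tle_refl p x)); rewrite -Hl.
by apply/negP => Hwx; move/eqP: ne; apply; apply: (tle_anti Htr (Hle x HxS) Hwx).
Qed.

Lemma good_orn_ok (T : finType) (p : T -> T) : is_tree p ->
  forall S w, good_orn p S w ->
  ornament p S && [forall x, is_max_in p S x == (x == w)].
Proof.
move=> Htr S w [HwS Hle Hcl].
have Hcw : forall n x, x \in S -> iter n p x = w -> connect (tedge p S) x w.
  elim=> [|n IH] x HxS; first by move=> /= ->; exact: connect0.
  case: (eqVneq x w) => [-> _|ne]; first exact: connect0.
  rewrite iterSr => Hn; apply: connect_trans (IH _ (Hcl x HxS ne) Hn).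
  apply: connect1; rewrite /tedge HxS Hcl //= /is_child eqxx /=.
  by rewrite eq_sym (p_neq Htr (Hle x HxS) ne).
have Hc : forall x, x \in S -> connect (tedge p S) x w.
  by move=> x HxS; case/tleP: (Hle x HxS) => n; exact: Hcw.
apply/andP; split.
  apply/andP; split; first by apply/set0Pn; exists w.
  apply/forallP => x; apply/implyP => HxS; apply/forallP => y; apply/implyP => HyS.
  apply: connect_trans (Hc x HxS) _.
  by rewrite ((sym_connect_sym (tedge_sym p S))); exact: Hc.
apply/forallP => x; apply/eqP; case: (eqVneq x w) => [->|ne].
  rewrite /is_max_in HwS /=; apply/forallP => y; apply/implyP => HyS.
  apply/negP => /andP [ne Hwy]; move/eqP: ne; apply.
  exact: (tle_anti Htr Hwy (Hle y HyS)).
rewrite /is_max_in; case HxS: (x \in S) => //=.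
apply/negP => /forallP /(_ w); rewrite HwS /= /tlt ne (Hle x HxS).
by [].
Qed.

Lemma orn_goodv (T : finType) (p : T -> T) : is_tree p ->
  forall s, is_ornamentation p s -> forall v, good_orn p (s v) v.
Proof.
move=> Htr s /andP [/forallP H _] v.
case/andP: (H v) => Ho /forallP Hm.
by apply: orn_good Htr _ _ Ho _ => x; exact: Hm.
Qed.

Lemma orn_nest (T : finType) (p : T -> T) s :
  is_ornamentation p s -> forall v w,
  [|| s v \subset s w, s w \subset s v | [disjoint s v & s w]].
Proof. by case/andP=> _ /forallP H v w; move/forallP: (H v); apply. Qed.

Lemma make_orn (T : finType) (p : T -> T) : is_tree p ->
  forall s : {ffun T -> {set T}}, (forall v, good_orn p (s v) v) ->
  (forall v w, [|| s v \subset s w, s w \subset s v | [disjoint s v & s w]]) ->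
  is_ornamentation p s.
Proof.
move=> Htr s Hg Hn; apply/andP; split.
  by apply/forallP => v; exact: good_orn_ok.
by apply/forallP => v; apply/forallP => w; exact: Hn.
Qed.

Lemma disjP (T : finType) (A B : {set T}) :
  reflect (forall x, x \in A -> x \in B -> False) [disjoint A & B].
Proof.
rewrite -setI_eq0; apply: (iffP eqP) => [H x Ha Hb|H].
  have : x \in A :&: B by rewrite inE Ha Hb.
  by rewrite H inE.
apply/setP => x; rewrite !inE; apply/negP => /andP [Ha Hb]; exact: H x Ha Hb.
Qed.

Lemma orn_in (T : finType) (p : T -> T) : is_tree p ->
  forall s, is_ornamentation p s -> forall v, v \in s v.
Proof. by move=> Htr s Hs v; case: (orn_goodv Htr Hs v). Qed.

Lemma orn_below (T : finType) (p : T -> T) : is_tree p ->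
  forall s, is_ornamentation p s -> forall v x, x \in s v -> tle p x v.
Proof. by move=> Htr s Hs v; case: (orn_goodv Htr Hs v). Qed.

Lemma good_up (T : finType) (p : T -> T) : is_tree p ->
  forall S w, good_orn p S w -> forall x z, x \in S -> tle p x z -> tle p z w -> z \in S.
Proof.
move=> Htr S w [HwS Hle Hcl] x z HxS /tleP [n <-].
elim: n x HxS => [|n IH] x HxS Hw; first by [].
case: (eqVneq x w) => [Exw|ne].
  have Hw' : tle p w (iter n.+1 p x) by rewrite -Exw; apply/tleP; exists n.+1.
  by rewrite (tle_anti Htr Hw Hw') -Exw.
by rewrite iterSr; apply: IH (Hcl x HxS ne) _; rewrite -iterSr.
Qed.

Lemma orn_up (T : finType) (p : T -> T) : is_tree p ->
  forall s, is_ornamentation p s -> forall w x z,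
  x \in s w -> tle p x z -> tle p z w -> z \in s w.
Proof. by move=> Htr s Hs w; exact: (good_up Htr (orn_goodv Htr Hs w)). Qed.

Lemma orn_sub (T : finType) (p : T -> T) : is_tree p ->
  forall s, is_ornamentation p s -> forall v w x,
  x \in s v -> x \in s w -> tle p v w -> s v \subset s w.
Proof.
move=> Htr s Hs v w x Hv Hw Hvw.
case/or3P: (orn_nest Hs v w) => // [Hwv|Hd].
  have Hwin : w \in s v by apply: (subsetP Hwv); exact: (orn_in Htr Hs).
  by rewrite (tle_anti Htr Hvw (orn_below Htr Hs Hwin)) subxx.
by move: Hd => /disjP /(_ x Hv Hw).
Qed.

Lemma orn_inj (T : finType) (p : T -> T) : is_tree p ->
  forall s, is_ornamentation p s -> forall x y, s x = s y -> x = y.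
Proof.
move=> Htr s Hs x y E.
have Hx : x \in s y by rewrite -E; exact: (orn_in Htr Hs).
have Hy : y \in s x by rewrite E; exact: (orn_in Htr Hs).
exact: (tle_anti Htr (orn_below Htr Hs Hx) (orn_below Htr Hs Hy)).
Qed.

Lemma PopP (T : finType) (p : T -> T) (s : {ffun T -> {set T}}) v y :
  reflect (y \in s v /\ forall t, orn_covered p t s -> y \in t v) (y \in Pop p s v).
Proof.
rewrite /Pop ffunE inE; apply: (iffP andP) => [[H1 /bigcapP H2]|[H1 H2]].
  by split.
by split => //; apply/bigcapP.
Qed.

Lemma Pop_sub (T : finType) (p : T -> T) (s : {ffun T -> {set T}}) v : Pop p s v \subset s v.
Proof. by apply/subsetP => y /PopP []. Qed.

Lemma covered_orn (T : finType) (p : T -> T) t s :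
  orn_covered p t s -> is_ornamentation p t.
Proof. by case/and4P. Qed.

Lemma Pop_orn (T : finType) (p : T -> T) : is_tree p ->
  forall s, is_ornamentation p s -> is_ornamentation p (Pop p s).
Proof.
move=> Htr s Hs; apply: make_orn => // [v|v w].
  split.
  - apply/PopP; split; first exact: (orn_in Htr Hs).
    by move=> t /covered_orn Ht; exact: (orn_in Htr Ht).
  - by move=> x /PopP [H _]; exact: (orn_below Htr Hs H).
  - move=> x /PopP [H1 H2] ne; apply/PopP; split.
      by case: (orn_goodv Htr Hs v) => _ _; apply.
    by move=> t Ht; case: (orn_goodv Htr (covered_orn Ht) v) => _ _; apply; auto.
case: (boolP [disjoint Pop p s v & Pop p s w]) => Hd; first by rewrite !orbT.
move: Hd; rewrite -setI_eq0 => /set0Pn [y]; rewrite inE => /andP [Hyv Hyw].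
have Hyv' := Hyv; have Hyw' := Hyw.
move: Hyv' Hyw' => /PopP [Hyv2 Htv] /PopP [Hyw2 Htw].
have Hsub : forall a b, y \in Pop p s a -> y \in Pop p s b -> tle p a b ->
    Pop p s a \subset Pop p s b.
  move=> a b /PopP [Ha Hta] /PopP [Hb Htb] Hab; apply/subsetP => x /PopP [Hxa Hxt].
  apply/PopP; split; first exact: (subsetP (orn_sub Htr Hs Ha Hb Hab)).
  move=> t Ht; apply: (subsetP (orn_sub Htr (covered_orn Ht) (Hta t Ht) (Htb t Ht) Hab)).
  exact: Hxt.
case/orP: (tle_total (orn_below Htr Hs Hyv2) (orn_below Htr Hs Hyw2)) => H.
  by rewrite Hsub.
by rewrite (Hsub w v) ?orbT.
Qed.

Definition maxblock (T : finType) (s : {ffun T -> {set T}}) (w u : T) : bool :=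
  [&& u != w, s u \subset s w &
      [forall z, (s u \subset s z) && (s z \subset s w) ==> (z == u) || (z == w)]].

Definition LB (T : finType) (p : T -> T) (s : {ffun T -> {set T}}) (w u : T) :=
  maxblock s w u /\ (forall y, y \in s w -> tle p y u -> y \in s u).

Definition removal (T : finType) (s : {ffun T -> {set T}}) (w u : T)
  : {ffun T -> {set T}} := [ffun z => if z == w then s w :\: s u else s z].

Lemma maxblock_card (T : finType) (p : T -> T) : is_tree p ->
  forall s, is_ornamentation p s -> forall w u, maxblock s w u -> #|s u| < #|s w|.
Proof.
move=> Htr s Hs w u /and3P [ne Hsub _]; apply: proper_card; apply/properP.
split => //; exists w; first exact: (orn_in Htr Hs).
apply/negP => Hw; move/eqP: ne; apply.
have Hu : u \in s w by apply: (subsetP Hsub); exact: (orn_in Htr Hs).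
exact: (tle_anti Htr (orn_below Htr Hs Hu) (orn_below Htr Hs Hw)).
Qed.

Lemma block_exists (T : finType) (p : T -> T) : is_tree p ->
  forall s, is_ornamentation p s -> forall w y, y \in s w -> y != w ->
  exists u, maxblock s w u /\ y \in s u.
Proof.
move=> Htr s Hs w y Hy ne.
have Hy0 : [&& y \in s y, y != w & s y \subset s w].
  rewrite (orn_in Htr Hs) ne /=.
  exact: (orn_sub Htr Hs (orn_in Htr Hs y) Hy (orn_below Htr Hs Hy)).
case: (@arg_maxnP T y (fun z => [&& y \in s z, z != w & s z \subset s w])
   (fun z => #|s z|) Hy0) => u /and3P [Hyu Huw Hsub] Hmax.
exists u; split => //; apply/and3P; split => //.
apply/forallP => z; apply/implyP => /andP [Huz Hzw].
case: (eqVneq z w) => [_|nzw]; first by rewrite orbT.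
have Pz : [&& y \in s z, z != w & s z \subset s w] by rewrite (subsetP Huz) // nzw Hzw.
have Hc := Hmax z Pz.
have E : s u = s z by apply/eqP; rewrite eqEcard Huz; exact: Hc.
by rewrite (orn_inj Htr Hs E) eqxx.
Qed.

Lemma deepest (T : finType) (p : T -> T) : is_tree p ->
  forall s, is_ornamentation p s -> forall w (C : pred T),
  (forall u, C u -> maxblock s w u) ->
  (forall u y u2, C u -> y \in s w -> tle p y u -> y \notin s u ->
     maxblock s w u2 -> y \in s u2 -> u2 != u -> tle p u2 u -> C u2) ->
  forall u0, C u0 -> exists u, C u /\ LB p s w u.
Proof.
move=> Htr s Hs w C HC Hcl u0 Cu0.
case: (@arg_maxnP T u0 C (fun z => #|anc p z|) Cu0) => u Cu Hmax.
exists u; split => //; split; first exact: HC.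
have /and3P [Huw Hsub /forallP Hm] := HC u Cu.
move=> y Hyw Hyu; apply: contraT => Hyn.
have Huw' : tle p u w.
  by apply: (orn_below Htr Hs); apply: (subsetP Hsub); exact: (orn_in Htr Hs).
have Hyne : y != w.
  apply/eqP => Eyw; rewrite Eyw in Hyu; move/eqP: Huw; apply.
  exact: (tle_anti Htr Huw' Hyu).
case: (block_exists Htr Hs Hyw Hyne) => u2 [Hb2 Hy2].
have Hyu2 := orn_below Htr Hs Hy2.
case/orP: (tle_total Hyu Hyu2) => H.
  have Huin : u \in s u2 := orn_up Htr Hs Hy2 Hyu H.
  have Hs2 : s u \subset s u2 := orn_sub Htr Hs (orn_in Htr Hs u) Huin H.
  move: Hb2 => /and3P [Hu2w Hsub2 _].
  move: (Hm u2); rewrite Hs2 Hsub2 /= => /orP [/eqP E|/eqP E].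
    by move: Hyn; rewrite -E Hy2.
  by rewrite E eqxx in Hu2w.
case: (eqVneq u2 u) => [E|ne]; first by move: Hyn; rewrite -E Hy2.
have := Hmax u2 (Hcl u y u2 Cu Hyw Hyu Hyn Hb2 Hy2 ne H).
by move=> Hle; have := leq_ltn_trans Hle (anc_lt Htr H ne); rewrite ltnn.
Qed.

Lemma removal_nest (T : finType) (p : T -> T) : is_tree p ->
  forall s, is_ornamentation p s -> forall w u, LB p s w u ->
  forall z, z != w ->
  [|| s w :\: s u \subset s z, s z \subset s w :\: s u | [disjoint s w :\: s u & s z]].
Proof.
move=> Htr s Hs w u [/and3P [Huw Hsub /forallP Hm] Hbot] z nzw.
have Hdis : s z \subset s u -> [disjoint s w :\: s u & s z].
  move=> Hzu; apply/disjP => x; rewrite inE => /andP [Hxu _] Hxz.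
  by rewrite (subsetP Hzu x Hxz) in Hxu.
case/or3P: (orn_nest Hs z w) => [Hzw|Hwz|Hd].
- case/or3P: (orn_nest Hs z u) => [Hzu|Huz|Hd].
  + by rewrite Hdis ?orbT.
  + move: (Hm z); rewrite Huz Hzw /= => /orP [/eqP E|/eqP E].
      by rewrite Hdis ?orbT // E subxx.
    by rewrite E eqxx in nzw.
  + apply/orP; right; apply/orP; left; apply/subsetP => x Hxz.
    rewrite inE (subsetP Hzw x Hxz) andbT; apply/negP => Hxu.
    by move/disjP: Hd; apply; [exact: Hxz|exact: Hxu].
- by apply/orP; left; apply: subset_trans Hwz; exact: subsetDl.
- apply/orP; right; apply/orP; right; apply/disjP => x; rewrite inE => /andP [_ Hxw] Hxz.
  by move/disjP: Hd; apply; [exact: Hxz|exact: Hxw].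
Qed.

Lemma removal_orn (T : finType) (p : T -> T) : is_tree p ->
  forall s, is_ornamentation p s -> forall w u, LB p s w u ->
  is_ornamentation p (removal s w u).
Proof.
move=> Htr s Hs w u HLB.
have HLB' := HLB; move: HLB' => [/and3P [Huw Hsub _] Hbot].
have HuS : u \in s w by apply: (subsetP Hsub); exact: (orn_in Htr Hs).
have HwnS : w \notin s u.
  apply/negP => Hw; move/eqP: Huw; apply.
  exact: (tle_anti Htr (orn_below Htr Hs HuS) (orn_below Htr Hs Hw)).
apply: make_orn => // [v|v z].
  rewrite ffunE; case: eqP => [->|_]; last exact: orn_goodv.
  case: (orn_goodv Htr Hs w) => Hw Hle Hcl; split.
  - by rewrite inE HwnS Hw.
  - by move=> x; rewrite inE => /andP [_ Hx]; apply: Hle.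
  - move=> x; rewrite inE => /andP [Hxu Hxw] ne; rewrite inE Hcl // andbT.
    apply/negP => Hpx.
    have Hxu' : tle p x u := tle_trans (tle_p p x) (orn_below Htr Hs Hpx).
    by rewrite (Hbot x Hxw Hxu') in Hxu.
rewrite !ffunE.
case: (eqVneq v w) => [Ev|nv]; case: (eqVneq z w) => [Ez|nz].
- by rewrite subxx.
- exact: (removal_nest Htr Hs HLB nz).
- case/or3P: (removal_nest Htr Hs HLB nv) => H.
  + by rewrite H orbT.
  + by rewrite H.
  + by rewrite disjoint_sym H !orbT.
- exact: (orn_nest Hs v z).
Qed.

Lemma removal_le (T : finType) (s : {ffun T -> {set T}}) w u :
  orn_le (removal s w u) s.
Proof.
apply/forallP => z; rewrite ffunE; case: eqP => [->|_]; last exact: subxx.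
exact: subsetDl.
Qed.

Lemma removal_neq (T : finType) (p : T -> T) : is_tree p ->
  forall s, is_ornamentation p s -> forall w u, LB p s w u ->
  removal s w u != s.
Proof.
move=> Htr s Hs w u [/and3P [_ Hsub _] _].
apply/negP => /eqP /ffunP /(_ w); rewrite ffunE eqxx => E.
have Hu := orn_in Htr Hs u.
have : u \in s w by apply: (subsetP Hsub).
by rewrite -E inE Hu.
Qed.

Lemma removal_covered (T : finType) (p : T -> T) : is_tree p ->
  forall s, is_ornamentation p s -> forall w u, LB p s w u ->
  orn_covered p (removal s w u) s.
Proof.
move=> Htr s Hs w u HLB.
have HLB' := HLB; move: HLB' => [/and3P [Huw Hsub _] Hbot].
have HuS : u \in s w by apply: (subsetP Hsub); exact: (orn_in Htr Hs).
apply/and4P; split => //.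
- exact: (removal_orn Htr Hs HLB).
- by rewrite /orn_lt (removal_neq Htr Hs HLB) removal_le.
apply/forallP => t; apply/negP => /and3P [Ht /andP [neRt /forallP HRt] /andP [nets /forallP Hts]].
have Heq : forall z, z != w -> t z = s z.
  move=> z nz; apply/eqP; rewrite eqEsubset Hts /=.
  by move: (HRt z); rewrite ffunE (negbTE nz).
case: (boolP (u \in t w)) => Hut.
  have Hsu : s u \subset t w.
    rewrite -(Heq u Huw).
    exact: (orn_sub Htr Ht (orn_in Htr Ht u) Hut (orn_below Htr Hs HuS)).
  move/negP: nets; apply; apply/eqP/ffunP => z.
  case: (eqVneq z w) => [->|nz]; last exact: Heq.
  apply/eqP; rewrite eqEsubset Hts /=; apply/subsetP => x Hx.
  case: (boolP (x \in s u)) => Hxu; first exact: (subsetP Hsu).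
  by move: (HRt w); rewrite ffunE eqxx => /subsetP; apply; rewrite inE Hxu.
move/negP: neRt; apply; apply/eqP/ffunP => z.
case: (eqVneq z w) => [->|nz]; last by rewrite ffunE (negbTE nz) Heq.
rewrite ffunE eqxx; apply/eqP; rewrite eqEsubset.
move: (HRt w); rewrite ffunE eqxx => -> /=.
apply/subsetP => x Hx; rewrite inE (subsetP (Hts w) x Hx) andbT.
apply/negP => Hxu; move/negP: Hut; apply.
exact: (orn_up Htr Ht Hx (orn_below Htr Hs Hxu) (orn_below Htr Hs HuS)).
Qed.

Lemma cover_removal (T : finType) (p : T -> T) : is_tree p ->
  forall s, is_ornamentation p s -> forall t, orn_covered p t s ->
  exists w u, LB p s w u /\ t = removal s w u.
Proof.
move=> Htr s Hs t /and4P [Ht _ /andP [nets /forallP Hts] /forallP Hmin].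
have [w0 Hw0] : exists w, t w != s w.
  case: (pickP (fun w => t w != s w)) => [w0 Hw0|H]; first by exists w0.
  move/negP: nets; case; apply/eqP/ffunP => z.
  by move: (H z) => /negbT; rewrite negbK => /eqP.
case: (@arg_minnP T w0 (fun w => t w != s w) (fun w => #|s w|) Hw0) => w Hw Hminw.
have Hwt : w \in t w := orn_in Htr Ht w.
have Key : forall u2 y, maxblock s w u2 -> y \in s u2 -> y \notin t w -> u2 \notin t w.
  move=> u2 y Hb2 Hy2 Hyt; apply/negP => Hu2t.
  have Hc := maxblock_card Htr Hs Hb2.
  have Etu2 : t u2 = s u2.
    apply/eqP; apply: contraT => Hne.
    by have := Hminw u2 Hne; rewrite leqNgt Hc.
  move/and3P: Hb2 => [_ Hsub2 _].
  have Hu2w : tle p u2 w.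
    by apply: (orn_below Htr Hs); apply: (subsetP Hsub2); exact: (orn_in Htr Hs).
  have := orn_sub Htr Ht (orn_in Htr Ht u2) Hu2t Hu2w.
  rewrite Etu2 => /subsetP /(_ y Hy2) Hy; by rewrite Hy in Hyt.
have [y0 Hy0w Hy0t] : exists2 y, y \in s w & y \notin t w.
  have Hsub := Hts w.
  case: (pickP (fun y => (y \in s w) && (y \notin t w))) => [y /andP [H1 H2]|H].
    by exists y.
  move/negP: Hw; case; rewrite eqEsubset Hsub /=; apply/subsetP => y Hy.
  by move: (H y); rewrite Hy /= => /negbT; rewrite negbK.
have Hy0ne : y0 != w by apply/negP => /eqP E; rewrite E Hwt in Hy0t.
case: (block_exists Htr Hs Hy0w Hy0ne) => u0 [Hb0 Hy0u0].
have C0 : maxblock s w u0 && (u0 \notin t w) by rewrite Hb0 (Key u0 y0).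
have [u [/andP [Hbu Hut] HLB]] : exists u, (maxblock s w u && (u \notin t w)) /\ LB p s w u.
  apply: (deepest Htr Hs (C := fun u => maxblock s w u && (u \notin t w)) _ _ C0).
- by move=> u /andP [].
- move=> u y u2 /andP [Hbu Hut] Hyw Hyu Hyn Hb2 Hy2 ne Hu2u.
  rewrite Hb2 /=; apply: (Key u2 y Hb2 Hy2); apply/negP => Hyt.
  move/negP: Hut; apply.
  move/and3P: Hbu => [_ Hsubu _].
  have Huw : tle p u w.
    by apply: (orn_below Htr Hs); apply: (subsetP Hsubu); exact: (orn_in Htr Hs).
  exact: (orn_up Htr Ht Hyt Hyu Huw).
exists w, u; split => //.
have Hcov := removal_covered Htr Hs HLB.
move: (Hmin (removal s w u)); rewrite (removal_orn Htr Hs HLB) /=.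
move/and4P: Hcov => [_ _ Hlt _]; rewrite Hlt andbT /orn_lt.
have Hle : orn_le t (removal s w u).
  apply/forallP => z; rewrite ffunE; case: eqP => [->|_]; last exact: Hts.
  apply/subsetP => x Hx; rewrite inE (subsetP (Hts w) x Hx) andbT.
  apply/negP => Hxu; move/negP: Hut; apply.
  move/and3P: Hbu => [_ Hsubu _].
  have Huw : tle p u w.
    by apply: (orn_below Htr Hs); apply: (subsetP Hsubu); exact: (orn_in Htr Hs).
  exact: (orn_up Htr Ht Hx (orn_below Htr Hs Hxu) Huw).
by rewrite Hle andbT negbK => /eqP.
Qed.

Lemma PopU (T : finType) (p : T -> T) : is_tree p ->
  forall s, is_ornamentation p s -> forall w u y, LB p s w u -> y \in s u ->
  y \notin Pop p s w.
Proof.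
move=> Htr s Hs w u y HLB Hy; apply/negP => /PopP [_ /(_ _ (removal_covered Htr Hs HLB))].
by rewrite ffunE eqxx inE Hy.
Qed.

Lemma PopL (T : finType) (p : T -> T) : is_tree p ->
  forall s, is_ornamentation p s -> forall v y, y \in s v ->
  (forall u, LB p s v u -> y \notin s u) -> y \in Pop p s v.
Proof.
move=> Htr s Hs v y Hy HL; apply/PopP; split => // t Ht.
case: (cover_removal Htr Hs Ht) => w [u [HLB ->]].
rewrite ffunE; case: eqP => [E|_] //.
by subst w; rewrite inE Hy andbT HL.
Qed.

Lemma PopL_ex (T : finType) (p : T -> T) : is_tree p ->
  forall s, is_ornamentation p s -> forall v y, y \in s v -> y \notin Pop p s v ->
  exists u, LB p s v u /\ y \in s u.
Proof.
move=> Htr s Hs v y Hy Hn; apply: NNPP => H; move/negP: Hn; apply.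
apply: (PopL Htr Hs Hy) => u HLB; apply/negP => Hyu; apply: H; by exists u.
Qed.

Lemma LemA (T : finType) (p : T -> T) : is_tree p ->
  forall tau, is_ornamentation p tau -> forall v u,
  LB p (Pop p tau) v u -> Pop p tau u = [set u].
Proof.
move=> Htr tau Ht v u [Hb Hbot].
set sg := Pop p tau in Hb Hbot *.
have Hs : is_ornamentation p sg := Pop_orn Htr Ht.
move: (Hb) => /and3P [Huv Hsubuv Hmuv].
apply/eqP; rewrite eqEsubset sub1set (orn_in Htr Hs) andbT.
apply/subsetP => x Hx; rewrite inE; apply: contraT => ne.
have Hxt : x \in tau u := subsetP (Pop_sub p tau u) x Hx.
case: (block_exists Htr Ht Hxt ne) => u0 [Hb0 _].
have [u' [_ HLB']] : exists u', maxblock tau u u' /\ LB p tau u u'.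
  by apply: (deepest Htr Ht (C := fun z => maxblock tau u z) _ _ Hb0).
have Hu'n : u' \notin sg u := PopU Htr Ht HLB' (orn_in Htr Ht u').
move: (HLB') => [/and3P [_ Hsub' _] _].
have Hu'u : u' \in tau u by apply: (subsetP Hsub'); exact: (orn_in Htr Ht).
have Husv : u \in sg v by apply: (subsetP Hsubuv); exact: (orn_in Htr Hs).
have Hutv : u \in tau v := subsetP (Pop_sub p tau v) u Husv.
have Huv' : tle p u v := orn_below Htr Ht Hutv.
have Htuv : tau u \subset tau v := orn_sub Htr Ht (orn_in Htr Ht u) Hutv Huv'.
have Hu'v : u' \in sg v.
  apply: (PopL Htr Ht (subsetP Htuv u' Hu'u)) => b HLBb; apply/negP => Hb'.
  have Hub : u \notin tau b.
    by apply/negP => Hub; move: (PopU Htr Ht HLBb Hub); rewrite Husv.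
  move: (HLBb) => [/and3P [Hbv Hsubb /forallP Hmb] _].
  case/or3P: (orn_nest Ht b u) => [Hbu|Hub'|Hd].
  - move: (Hmb u); rewrite Hbu Htuv /= => /orP [/eqP E|/eqP E].
      by move: Hub; rewrite E (orn_in Htr Ht).
    by rewrite E eqxx in Huv.
  - by move: Hub; rewrite (subsetP Hub') // (orn_in Htr Ht).
  - by move/disjP: Hd; apply; [exact: Hb'|exact: Hu'u].
by move: Hu'n; rewrite (Hbot u' Hu'v (orn_below Htr Ht Hu'u)).
Qed.

Lemma sing_pop (T : finType) (p : T -> T) : is_tree p ->
  forall s, is_ornamentation p s -> forall y, s y = [set y] -> Pop p s y = [set y].
Proof.
move=> Htr s Hs y E; apply/eqP; rewrite eqEsubset -{1}E Pop_sub /= sub1set.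
exact: (orn_in Htr (Pop_orn Htr Hs)).
Qed.

Lemma step (T : finType) (p : T -> T) : is_tree p ->
  forall tau, is_ornamentation p tau -> forall v c, is_child p c v ->
  c \in Pop p (Pop p tau) v ->
  #|[set x | is_bead p (Pop p tau) v c x]| <
  #|[set x | is_bead p (Pop p (Pop p tau)) v c x]|.
Proof.
move=> Htr tau Ht v c /andP [/eqP Hpc Hcv] HcP.
set sg := Pop p tau in HcP *.
have Hs : is_ornamentation p sg := Pop_orn Htr Ht.
set P := Pop p sg in HcP *.
have HP : is_ornamentation p P := Pop_orn Htr Hs.
have HcS : c \in sg v := subsetP (Pop_sub p sg v) c HcP.
apply: proper_card; apply/properP; split.
  apply/subsetP => x; rewrite !inE => /and3P [Hxc Hxv /forallP Hy].
  apply/and3P; split => //.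
    by apply/negP => H; move/negP: Hxv; apply; exact: (subsetP (Pop_sub p sg v)).
  apply/forallP => y; apply/implyP => Hxy; move/implyP: (Hy y) => /(_ Hxy) /orP [Hyv|/eqP Hsy].
    case: (boolP (y \in P v)) => [_ //|Hyn].
    case: (PopL_ex Htr Hs Hyv Hyn) => u [HLB Hyu].
    have Eu := LemA Htr Ht HLB.
    move: (Hyu); rewrite Eu inE => /eqP Eyu; subst y.
    by rewrite (sing_pop Htr Hs Eu) eqxx orbT.
  by rewrite (sing_pop Htr Hs Hsy) eqxx orbT.
have Hcv' : tle p c v by rewrite -Hpc; exact: tle_p.
have HCc : maxblock sg v c && tle p c c.
  rewrite tle_refl andbT; apply/and3P; split => //.
    exact: (orn_sub Htr Hs (orn_in Htr Hs c) HcS Hcv').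
  apply/forallP => z; apply/implyP => /andP [Hcz Hzv].
  have Hcz' : tle p c z := orn_below Htr Hs (subsetP Hcz c (orn_in Htr Hs c)).
  have Hzv' : tle p z v := orn_below Htr Hs (subsetP Hzv z (orn_in Htr Hs z)).
  case: (tle_cases Hcz') => [->|]; first by rewrite eqxx.
  by rewrite Hpc => Hvz; rewrite (tle_anti Htr Hzv' Hvz) eqxx orbT.
have [l [/andP [_ Hlc] HLB]] : exists l, (maxblock sg v l && tle p l c) /\ LB p sg v l.
  apply: (deepest Htr Hs (C := fun u => maxblock sg v u && tle p u c) _ _ HCc).
  - by move=> u /andP [].
  - move=> u y u2 /andP [_ Huc] _ _ _ Hb2 _ _ Hu2u.
    by rewrite Hb2 (tle_trans Hu2u Huc).
have El := LemA Htr Ht HLB.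
move: (HLB) => [/and3P [Hlv Hsubl /forallP Hml] Hbotl].
have HlS : l \in sg v by apply: (subsetP Hsubl); exact: (orn_in Htr Hs).
exists l; last by rewrite inE /is_bead HlS andbF.
rewrite inE; apply/and3P; split => //.
  exact: (PopU Htr Hs HLB (orn_in Htr Hs l)).
apply/forallP => y; apply/implyP => /andP [Hly Hyc].
case: (eqVneq y l) => [->|nyl].
  by rewrite (sing_pop Htr Hs El) eqxx orbT.
apply/orP; left.
have HyS : y \in sg v := orn_up Htr Hs HlS Hly (tle_trans Hyc Hcv').
apply: (PopL Htr Hs HyS) => u HLBu; apply/negP => Hyu.
move: (HLBu) => [/and3P [Huv Hsubu _] Hbotu].
have Hlu : l \in sg u := Hbotu l HlS (tle_trans Hly (orn_below Htr Hs Hyu)).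
move: (Hml u); rewrite El sub1set Hlu Hsubu /= => /orP [/eqP E|/eqP E].
  by move: Hyu; rewrite E El inE (negbTE nyl).
by rewrite E eqxx in Huv.
Qed.

Lemma iter_orn (T : finType) (p : T -> T) : is_tree p ->
  forall d, is_ornamentation p d -> forall k, is_ornamentation p (iter k (Pop p) d).
Proof. by move=> Htr d Hd; elim=> //= k IH; exact: Pop_orn. Qed.

Lemma main_count (T : finType) (p : T -> T) : is_tree p ->
  forall d, is_ornamentation p d -> forall v c, is_child p c v ->
  forall k, c \in iter k.+1 (Pop p) d v ->
  k <= #|[set x | is_bead p (iter k.+1 (Pop p) d) v c x]|.
Proof.
move=> Htr d Hd v c Hc; elim=> // k IH Hin.
have Hin' : c \in iter k.+1 (Pop p) d v.
  exact: (subsetP (Pop_sub p (iter k.+1 (Pop p) d) v)).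
have := IH Hin'.
have := step Htr (iter_orn Htr Hd k) Hc Hin.
by move=> H1 H2; apply: leq_ltn_trans H2 H1.
Qed.

Theorem proposition5p3 (T : finType) (p : T -> T) (r : T)
  (Hroot : p r = r) (Htree : forall v : T, fconnect p v r)
  (k : nat) (delta : {ffun T -> {set T}}) :
  is_ornamentation p delta ->
  forall v c : T, is_child p c v -> c \in iter k (Pop p) delta v ->
  k - 1 <= #|beads p (iter k (Pop p) delta) v c|.
Proof.
move=> Hd v c Hc Hin.
have Htr : is_tree p by exists r.
case: k Hin => [|k] Hin //.
rewrite /beads card_in_imset; first by rewrite subn1 /=; exact: main_count.
move=> x y _ _ /= E.
exact: (orn_inj Htr (iter_orn Htr Hd k.+1) E).
Qed.
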